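(* There exist universal constants $c_1,c_2,c_3,c_4>0$ and $n_0$ such that for all $n\ge n_0$ and all integers $k$ with $2\le k\le n$, there is a unit-weight graph with at most $n$ vertices on which simultaneously: $c_1k\le\mathsf{OPT}\le c_2k$; $\mathsf{OPT}^{\mathsf{stable}}\ge c_3 n$; and every persuasive signaling scheme (with any finite signal space) has cost at least $c_4\min\{k\sqrt{n},\,n\}$.
   Context: Setting. For a graph on vertex set $V$ with $N=|V|$ vertices, $W$ is a symmetric $\{0,1\}$ matrix with $W_{v,v}=1$ and $W_{u,v}=1$ iff $u,v$ are adjacent (unit-weight graph). A vector $\theta\in\mathbb{R}_{\ge0}^V$ is feasible if $W\theta\ge\mathbf 1$ coordinatewise, and stable if it is feasible and for every $v$, $\theta_v=\min\{x\ge0: x+\sum_{v'\neq v}W_{v,v'}\theta_{v'}\ge1\}$. $\mathsf{OPT}=\min\{\|\theta\|_1:\theta\ge0\text{ feasible}\}$ and $\mathsf{OPT}^{\mathsf{stable}}=\min\{\|\theta\|_1:\theta\text{ stable}\}$. Signaling. There are $N$ agents; the type profile $t$ is a uniformly random bijection $[N]\to V$. A signaling scheme with finite signal space $\Sigma\subset[0,1]$ is a map $\varphi$ assigning to each bijection $t$ a distribution $\varphi(t)$ on $\Sigma^V$; given $t$, $s\sim\varphi(t)$ is drawn and agent $i$ privately receives $s_{t_i}$. For agent $i$, a signal $\theta\in\Sigma$ with $\Pr[s_{t_i}=\theta]>0$ and $x\ge0$, let $Q_i(x\mid\theta)=\mathbb{E}\big[x+\sum_{v'\neq t_i}W_{t_i,v'}s_{v'}\,\big|\,s_{t_i}=\theta\big]$.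 The scheme is persuasive if for every agent $i$ and every such $\theta$: $Q_i(\theta\mid\theta)\ge1$ and $\theta=\min\{x\ge0:Q_i(x\mid\theta)\ge1\}$. Its cost is $\mathbb{E}[\|s\|_1]$. *)

(* Defs.v *)
From HB Require Import structures.
From mathcomp Require Import all_boot all_order all_algebra.
From mathcomp Require Import fingroup perm.
From mathcomp Require Import reals.
Set Implicit Arguments. Unset Strict Implicit. Unset Printing Implicit Defensive.
Import Order.TTheory GRing.Theory Num.Theory.
Local Open Scope ring_scope.

Section Defs.
Variable R : realType.

Definition simple_graph (N : nat) (e : rel 'I_N) : Prop :=
  (forall u v, e u v = e v u) /\ (forall v, e v v = false).

Definition Wmat (N : nat) (e : rel 'I_N) (u v : 'I_N) : R :=
  if (u == v) || e u v then 1 else 0.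

Definition l1norm (N : nat) (th : 'I_N -> R) : R := \sum_(v < N) `|th v|.

Definition feasible (N : nat) (e : rel 'I_N) (th : 'I_N -> R) : Prop :=
  (forall v, 0 <= th v) /\
  (forall v, 1 <= \sum_(u < N) Wmat e v u * th u).

Definition stable (N : nat) (e : rel 'I_N) (th : 'I_N -> R) : Prop :=
  feasible e th /\
  forall v,
    let S := \sum_(u < N | u != v) Wmat e v u * th u in
    [/\ 0 <= th v, 1 <= th v + S &
        forall x : R, 0 <= x -> 1 <= x + S -> th v <= x].

(* The finite signal space Sigma is given as the range of
   sig : 'I_m -> R (values in [0,1]); a signal vector s in Sigma^V is encoded
   by s : {ffun 'I_N -> 'I_m} (vertex v receives value sig (s v)).
   phi t s is the probability that phi(t) outputs s; the type profile t is a
   bijection [N] -> V, i.e. t : {perm 'I_N}, drawn uniformly. *)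
Definition valid_scheme (N m : nat) (sig : 'I_m -> R)
    (phi : {perm 'I_N} -> {ffun 'I_N -> 'I_m} -> R) : Prop :=
  [/\ forall j, 0 <= sig j <= 1,
      forall t s, 0 <= phi t s &
      forall t, \sum_(s : {ffun 'I_N -> 'I_m}) phi t s = 1].

Definition jprob (N m : nat) (phi : {perm 'I_N} -> {ffun 'I_N -> 'I_m} -> R)
    (t : {perm 'I_N}) (s : {ffun 'I_N -> 'I_m}) : R :=
  (#|{perm 'I_N}|%:R)^-1 * phi t s.

Definition prsig (N m : nat) (sig : 'I_m -> R)
    (phi : {perm 'I_N} -> {ffun 'I_N -> 'I_m} -> R) (i : 'I_N) (th : R) : R :=
  \sum_(t : {perm 'I_N}) \sum_(s : {ffun 'I_N -> 'I_m}) (if sig (s (t i)) == th then jprob phi t s else 0).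

Definition Qcond (N : nat) (e : rel 'I_N) (m : nat) (sig : 'I_m -> R)
    (phi : {perm 'I_N} -> {ffun 'I_N -> 'I_m} -> R) (i : 'I_N) (x th : R) : R :=
  (\sum_(t : {perm 'I_N}) \sum_(s : {ffun 'I_N -> 'I_m})
     (if sig (s (t i)) == th then
        jprob phi t s *
          (x + \sum_(v' < N | v' != t i) Wmat e (t i) v' * sig (s v'))
      else 0)) / prsig sig phi i th.

Definition persuasive (N : nat) (e : rel 'I_N) (m : nat) (sig : 'I_m -> R)
    (phi : {perm 'I_N} -> {ffun 'I_N -> 'I_m} -> R) : Prop :=
  forall (i : 'I_N) (th : R), 0 < prsig sig phi i th ->
    [/\ 0 <= th, 1 <= Qcond e sig phi i th th &
        forall x : R, 0 <= x -> 1 <= Qcond e sig phi i x th -> th <= x].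

Definition cost (N m : nat) (sig : 'I_m -> R)
    (phi : {perm 'I_N} -> {ffun 'I_N -> 'I_m} -> R) : R :=
  \sum_(t : {perm 'I_N}) \sum_(s : {ffun 'I_N -> 'I_m}) jprob phi t s * \sum_(v < N) sig (s v).

End Defs.

(* Main.v *)
Require Import Defs.
From HB Require Import structures.
From mathcomp Require Import all_boot all_order all_algebra.
From mathcomp Require Import fingroup perm.
From mathcomp Require Import reals.
From mathcomp Require Import ring lra zify.
Set Implicit Arguments. Unset Strict Implicit. Unset Printing Implicit Defensive.
Import Order.TTheory GRing.Theory Num.Theory.
Local Open Scope ring_scope.

Notation VT p m q := (('I_p + ('I_p * 'I_m)) + 'I_q)%type.

Definition adjT (p m q : nat) (x y : VT p m q) : bool :=
  match x, y with
  | inl (inl i), inl (inl j) => i != j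
  | inl (inl i), inl (inr lj) => i == lj.1
  | inl (inr li), inl (inl j) => li.1 == j
  | _, _ => false
  end.

Definition WT (R : realType) (p m q : nat) (x y : VT p m q) : R :=
  match x, y with
  | inl (inl i), inl (inl j) => 1
  | inl (inl i), inl (inr lj) => if i == lj.1 then 1 else 0
  | inl (inr li), inl (inl j) => if li.1 == j then 1 else 0
  | inl (inr li), inl (inr lj) => if li == lj then 1 else 0
  | inr z, inr z' => if z == z' then 1 else 0
  | _, _ => 0
  end.

Lemma WTE (R : realType) (p m q : nat) (x y : VT p m q) :
  (if (x == y) || adjT x y then 1 else 0) = WT R x y.
Proof.
case: x => [[i|[i l]]|z]; case: y => [[j|[j l']]|z'] //=.
- by case: (eqVneq i j) => [->|ne]; rewrite ?eqxx ?ne ?orbT //.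
all: by rewrite orbF.
Qed.

Definition rs (R : realType) (p m q : nat) (f : VT p m q -> R) (x : VT p m q) : R :=
  \sum_y WT R x y * f y.

Lemma sumT (R : realType) (p m q : nat) (F : VT p m q -> R) :
  \sum_x F x = \sum_i F (inl (inl i)) + \sum_i \sum_l F (inl (inr (i, l))) + \sum_z F (inr z).
Proof.
rewrite big_sumType /= big_sumType /=; congr (_ + _ + _).
rewrite pair_bigA /=; apply: eq_bigr => -[i l] _ //.
Qed.

Lemma rs_hub (R : realType) (p m q : nat) (f : VT p m q -> R) i :
  rs f (inl (inl i)) = \sum_j f (inl (inl j)) + \sum_l f (inl (inr (i, l))).
Proof.
rewrite /rs sumT [\sum_(z < q) _]big1 ?addr0; last by move=> z _; rewrite /WT /= mul0r.
congr (_ + _).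
  by apply: eq_bigr => j _; rewrite /WT /= mul1r.
rewrite (bigD1 i) //= [X in _ + X]big1 ?addr0; last first.
  move=> j nj; apply: big1 => l _; rewrite /WT /= eq_sym (negbTE nj) /= mul0r //.
by apply: eq_bigr => l _; rewrite /WT /= eqxx mul1r.
Qed.

Lemma rs_leaf (R : realType) (p m q : nat) (f : VT p m q -> R) i l :
  rs f (inl (inr (i, l))) = f (inl (inl i)) + f (inl (inr (i, l))).
Proof.
rewrite /rs sumT [\sum_(z < q) _]big1 ?addr0; last by move=> z _; rewrite /WT /= mul0r.
congr (_ + _).
  rewrite (bigD1 i) //= [X in _ + X]big1 ?addr0; last first.
    by move=> j nj; rewrite /WT /= eq_sym (negbTE nj) mul0r.
  by rewrite /WT /= eqxx mul1r.
rewrite (bigD1 i) //= [X in _ + X]big1 ?addr0; last first.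
  move=> j nj; apply: big1 => l' _; rewrite /WT /=.
  by rewrite xpair_eqE [i == j]eq_sym (negbTE nj) mul0r.
rewrite (bigD1 l) //= [X in _ + X]big1 ?addr0; last first.
  move=> l' nl; rewrite /WT /= xpair_eqE eqxx /= [l == l']eq_sym (negbTE nl) mul0r //.
by rewrite /WT /= eqxx mul1r.
Qed.

Lemma rs_iso (R : realType) (p m q : nat) (f : VT p m q -> R) z :
  rs f (inr z) = f (inr z).
Proof.
rewrite /rs sumT big1 ?add0r; last by move=> i _; rewrite /WT /= mul0r.
rewrite big1 ?add0r; last by move=> i _; apply: big1 => l _; rewrite /WT /= mul0r.
rewrite (bigD1 z) //= [X in _ + X]big1 ?addr0; first by rewrite /WT /= eqxx mul1r.
by move=> z' nz; rewrite /WT /= eq_sym (negbTE nz) mul0r.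
Qed.

Definition Nv (p m q : nat) := #|{: VT p m q}|.

Lemma NvE p m q : Nv p m q = (p + p * m + q)%N.
Proof. by rewrite /Nv !card_sum card_prod !card_ord. Qed.

Definition Ev (p m q : nat) : rel 'I_(Nv p m q) :=
  fun u v => adjT (enum_val u) (enum_val v).

Lemma sumN (R : realType) p m q (F : 'I_(Nv p m q) -> R) :
  \sum_u F u = \sum_(x : VT p m q) F (enum_rank x).
Proof.
rewrite (reindex (@enum_rank (VT p m q))) //.
by exists enum_val => x _; [apply: enum_rankK | apply: enum_valK].
Qed.

Lemma WmatE (R : realType) p m q (u v : 'I_(Nv p m q)) :
  Wmat R (@Ev p m q) u v = WT R (enum_val u) (enum_val v).
Proof.
rewrite /Wmat /Ev -WTE; congr (if _ then _ else _); congr (_ || _).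
by rewrite (inj_eq (can_inj enum_valK)).
Qed.

Lemma Ev_simple p m q : simple_graph (@Ev p m q).
Proof.
split.
  move=> u v; rewrite /Ev.
  case: (enum_val u) => [[i|[i l]]|z]; case: (enum_val v) => [[j|[j l']]|z'] //=;
  by rewrite eq_sym.
move=> v; rewrite /Ev; case: (enum_val v) => [[i|[i l]]|z] //=.
by rewrite eqxx.
Qed.

Lemma rowN (R : realType) p m q (th : 'I_(Nv p m q) -> R) (v : 'I_(Nv p m q)) :
  \sum_u Wmat R (@Ev p m q) v u * th u = rs (fun x => th (enum_rank x)) (enum_val v).
Proof.
rewrite sumN /rs; apply: eq_bigr => x _; by rewrite WmatE enum_rankK.
Qed.

Lemma l1N (R : realType) p m q (th : 'I_(Nv p m q) -> R) :
  l1norm th = \sum_x `|th (enum_rank x)|.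
Proof. by rewrite /l1norm sumN. Qed.

Lemma feasT (R : realType) p m q (th : 'I_(Nv p m q) -> R) :
  feasible (@Ev p m q) th ->
  (forall x, 0 <= th (enum_rank x)) /\
  (forall x, 1 <= rs (fun y => th (enum_rank y)) x).
Proof.
case=> h0 h1; split=> // x.
by have := h1 (enum_rank x); rewrite rowN enum_rankK.
Qed.

Lemma sum1_ord (R : realType) n : \sum_(i < n) (1 : R) = n%:R.
Proof. by rewrite sumr_const card_ord. Qed.

Lemma opt_lb (R : realType) p m q (th : 'I_(Nv p m q) -> R) :
  (0 < m)%N -> feasible (@Ev p m q) th -> (p + q)%:R <= l1norm th.
Proof.
move=> m0 /feasT [h0 h1]; set f := fun y => th (enum_rank y).
rewrite l1N (eq_bigr (fun x => f x)); last by move=> x _; rewrite ger0_norm.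
rewrite sumT natrD lerD //.
  rewrite -big_split /=.
  rewrite -(sum1_ord R p).
  apply: ler_sum => i _.
  pose l0 := Ordinal m0.
  rewrite (bigD1 l0) //= addrA.
  have := h1 (inl (inr (i, l0))); rewrite rs_leaf => H.
  apply: (le_trans H); rewrite lerDl; apply: sumr_ge0 => l _; exact: h0.
rewrite -(sum1_ord R q).
apply: ler_sum => z _; have := h1 (inr z); by rewrite rs_iso.
Qed.

Lemma eq_rs (R : realType) p m q (f g : VT p m q -> R) x :
  f =1 g -> rs f x = rs g x.
Proof. by move=> fg; rewrite /rs; apply: eq_bigr => y _; rewrite fg. Qed.

Definition indT (R : realType) p m q (x : VT p m q) : R :=
  match x with inl (inr _) => 0 | _ => 1 end.

Lemma opt_ub (R : realType) p m q :
  exists th : 'I_(Nv p m q) -> R,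
    feasible (@Ev p m q) th /\ l1norm th <= (p + q)%:R.
Proof.
exists (fun u => indT R (enum_val u)); split.
  split; first by move=> v; case: (enum_val v) => [[i|[i l]]|z].
  move=> v; rewrite rowN (@eq_rs _ _ _ _ _ (@indT R p m q)); last by move=> y; rewrite enum_rankK.
  case: (enum_val v) => [[i|[i l]]|z].
  - rewrite rs_hub (bigD1 i) //= -addrA lerDl addr_ge0 //.
      by apply: sumr_ge0.
    by apply: sumr_ge0.
  - by rewrite rs_leaf /= addr0.
  - by rewrite rs_iso.
rewrite l1N (eq_bigr (fun x => indT R x)); last first.
  by move=> x _; rewrite enum_rankK; case: x => [[i|[i l]]|z]; rewrite /= ?normr0 ?normr1.
rewrite sumT natrD /= !sum1_ord [X in _ + X + _]big1 ?addr0 //.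
by move=> i _; rewrite big1.
Qed.

Lemma rowsplit (R : realType) N (e : rel 'I_N) (th : 'I_N -> R) v :
  \sum_u Wmat R e v u * th u = th v + \sum_(u < N | u != v) Wmat R e v u * th u.
Proof. by rewrite (bigD1 v) //= /Wmat eqxx /= mul1r. Qed.

Lemma stable_pos (R : realType) N (e : rel 'I_N) (th : 'I_N -> R) v :
  stable e th -> 0 < th v -> \sum_u Wmat R e v u * th u <= 1.
Proof.
case=> _ /(_ v) [_ _ Hmin] pos; rewrite rowsplit.
set S := \sum_(u < N | u != v) _ in Hmin *.
case: (lerP 0 (1 - S)) => H.
  have := Hmin (1 - S) H; rewrite subrK lexx => /(_ isT).
  by rewrite lerBrDr.
have := Hmin 0 (lexx 0); rewrite add0r.
have -> : 1 <= S by rewrite subr_lt0 in H; apply: ltW.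
move=> /(_ isT) => h; by rewrite ltNge h in pos.
Qed.

Lemma stable_lb (R : realType) p m q (th : 'I_(Nv p m q) -> R) :
  stable (@Ev p m q) th -> m%:R * (p%:R - 1) + q%:R <= l1norm th.
Proof.
move=> st; have [h0 h1] := feasT st.1; set f := fun y => th (enum_rank y).
have h2 : forall x, 0 < f x -> rs f x <= 1.
  by move=> x px; have := stable_pos st px; rewrite rowN enum_rankK.
rewrite l1N (eq_bigr (fun x => f x)); last by move=> x _; rewrite ger0_norm.
rewrite sumT lerD //; last first.
  rewrite -(sum1_ord R q); apply: ler_sum => z _; have := h1 (inr z); by rewrite rs_iso.
set A := \sum_i f (inl (inl i)).
have A0 : 0 <= A by apply: sumr_ge0 => i _; apply: h0.
have A1 : A <= 1.
  case: (pickP (fun i => 0 < f (inl (inl i)))) => [i /= pi|none].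
    have := h2 _ pi; rewrite rs_hub -/A => H; apply: le_trans H.
    by rewrite lerDl; apply: sumr_ge0 => l _; apply: h0.
  rewrite /A; apply: (@le_trans _ _ (\sum_(i < p) (0:R))); last by rewrite big1_eq.
  apply: ler_sum => i _; by rewrite leNgt none.
apply: (@le_trans _ _ (\sum_i \sum_l f (inl (inr (i, l))))); last by rewrite lerDr.
apply: (@le_trans _ _ (\sum_(i < p) m%:R * (1 - f (inl (inl i))))).
  rewrite -mulr_sumr sumrB sum1_ord -/A ler_wpM2l //.
  by rewrite lerB.
apply: ler_sum => i _.
rewrite -(sum1_ord R m) mulr_suml; apply: ler_sum => l _.
rewrite mul1r lerBlDl; have := h1 (inl (inr (i, l))); by rewrite rs_leaf.
Qed.


Definition hK (R : realType) (m : nat) (x : R) : R := 8 * x / (1 - x + m%:R^-1).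
Definition gK (R : realType) (m : nat) (x : R) : R := if x <= 2^-1 then 1 else 1 - hK m x.

Lemma den_pos (R : realType) m (x : R) : (0 < m)%N -> x <= 1 -> 0 < 1 - x + m%:R^-1.
Proof.
move=> m0 x1; have : 0 < (m%:R : R)^-1 by rewrite invr_gt0 ltr0n.
lra.
Qed.

Lemma hK_ge0 (R : realType) m (x : R) : (0 < m)%N -> 0 <= x <= 1 -> 0 <= hK m x.
Proof.
move=> m0 /andP[x0 x1]; rewrite /hK divr_ge0 //; first lra.
by apply: ltW; apply: den_pos.
Qed.

Lemma hK_bd (R : realType) m (x : R) : (0 < m)%N -> 0 <= x <= 1 -> hK m x * (1 - x) <= 8 * x.
Proof.
move=> m0 /andP[x0 x1]; rewrite /hK mulrAC ler_pdivrMr; last exact: den_pos.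
have : 0 < (m%:R : R)^-1 by rewrite invr_gt0 ltr0n.
nra.
Qed.

Lemma hK_big (R : realType) m (x : R) : (0 < m)%N -> 2^-1 < x <= 1 ->
  4 / (1 - x + m%:R^-1) <= hK m x.
Proof.
move=> m0 /andP[x0 x1]; rewrite /hK ler_pM2r; first lra.
by rewrite invr_gt0; apply: den_pos => //; apply: ltW.
Qed.

Lemma gK_le1 (R : realType) m (x : R) : (0 < m)%N -> 0 <= x <= 1 -> gK m x <= 1.
Proof.
move=> m0 hx; rewrite /gK; case: ifP => _ //.
have := hK_ge0 m0 hx; lra.
Qed.

Lemma gK0 (R : realType) m : gK m (0 : R) = 1.
Proof. by rewrite /gK invr_ge0 ler0n. Qed.

Lemma leaf_ineq (R : realType) m (x a : R) : (0 < m)%N -> 0 <= x <= 1 -> 0 <= a <= 1 ->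
  1 - a <= 11 * x - gK m x * (a + x - 1) - gK m a * x.
Proof.
move=> m0 hx ha; have ga := gK_le1 m0 ha.
have gax : gK m a * x <= x by rewrite -[X in _ <= X]mul1r ler_wpM2r //; case/andP: hx.
rewrite [gK m x]/gK; case: ifP => hle.
  move: hx ha => /andP[x0 x1] /andP[a0 a1]; lra.
have h0 := hK_ge0 m0 hx; have hb := hK_bd m0 hx.
move: hx ha => /andP[x0 x1] /andP[a0 a1].
have : hK m x * (a + x - 1) >= - (hK m x * (1 - x)).
  rewrite -mulrN ler_wpM2l //; lra.
lra.
Qed.

Lemma iso_ineq (R : realType) m (x : R) : (0 < m)%N -> 0 <= x <= 1 ->
  1 <= 11 * x - gK m x * (x - 1).
Proof.
move=> m0 hx; rewrite /gK; case: ifP => hle.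
  move: hx => /andP[x0 x1]; lra.
have hb := hK_bd m0 hx; move: hx => /andP[x0 x1].
have E : (1 - hK m x) * (x - 1) = (x - 1) + hK m x * (1 - x) by ring.
rewrite E; lra.
Qed.

Lemma amgm (R : realType) (y u : R) : 0 < u -> 4 <= y -> y <= y^+2 / (2 * u) + u - 1.
Proof.
move=> u0 y4.
have -> : y ^+ 2 / (2 * u) = y^+2 / 2 / u by rewrite invfM mulrA.
rewrite -subr_ge0.
have H : y ^+ 2 / 2 / u + u - 1 - y = (y^+2 / 2 + u^+2 - u - y * u) / u.
  by field; rewrite gt_eqF.
rewrite H divr_ge0 ?ltW //.
have h1 := sqr_ge0 (2 * u - y - 1). nra.
Qed.

Definition hterm (R : realType) (m : nat) (a A : R) : R :=
  11 * a - gK m a * (A - 1) + m%:R * (1 - a).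

Lemma hK_ge2 (R : realType) m (a : R) : (0 < m)%N -> 2^-1 < a <= 1 -> 2 <= hK m a.
Proof.
move=> m0 ha; apply: le_trans (hK_big m0 ha).
have d0 := den_pos (x := a) m0 (proj2 (andP ha)).
rewrite ler_pdivlMr //.
have : (m%:R : R)^-1 <= 1 by rewrite invf_le1 ?ler1n ?ltr0n.
move: ha => /andP[a0 a1]; lra.
Qed.

Lemma hub_half (R : realType) m p (a A : R) : (0 < m)%N -> 0 <= a <= 1 -> a <= A -> A <= p%:R ->
  4 * p%:R <= m%:R :> R -> m%:R * (1 - a) / 2 <= hterm m a A.
Proof.
move=> m0 ha aA Ap pm; rewrite /hterm /gK.
have m0' : (0 : R) <= m%:R by rewrite ler0n.
case: ifP => hle.
  have : m%:R / 2 <= m%:R * (1 - a) :> R.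
    rewrite ler_pM2l ?ltr0n //; lra.
  move: ha => /andP[a0 a1]; lra.
have ha' : 2^-1 < a <= 1 by move: ha => /andP[_ ->]; rewrite andbT ltNge hle.
have h2 := hK_ge2 m0 ha'; have hb := hK_bd m0 ha; have h0 := hK_ge0 m0 ha.
have mm : 0 <= m%:R * (1 - a) by rewrite mulr_ge0 //; move: ha => /andP[_ a1]; lra.
move: ha => /andP[a0 a1].
case: (lerP 1 A) => A1.
  have : 0 <= (hK m a - 1) * (A - 1) by rewrite mulr_ge0 //; lra.
  lra.
have : hK m a * (A - 1) >= - (hK m a * (1 - a)).
  rewrite -mulrN ler_wpM2l //; lra.
lra.
Qed.

Lemma hub_big (R : realType) m p (a A : R) : (0 < m)%N -> 0 <= a <= 1 -> a <= A -> A <= p%:R ->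
  4 * p%:R <= m%:R :> R -> p%:R / 4 <= A - 1 -> 16 <= p%:R * m%:R :> R ->
  Num.min (m%:R / 4) (Num.sqrt (p%:R * m%:R)) <= hterm m a A.
Proof.
move=> m0 ha aA Ap pm pA pm16.
have hh := hub_half m0 ha aA Ap pm.
rewrite ge_min; apply/orP.
case: (lerP a 2^-1) => hle.
  left; apply: le_trans hh.
  have : m%:R / 2 <= m%:R * (1 - a) :> R.
    rewrite ler_pM2l ?ltr0n //; move: ha => /andP[a0 a1]; lra.
  lra.
right.
have ha' : 2^-1 < a <= 1 by rewrite hle; case/andP: ha.
have h2 := hK_ge2 m0 ha'; have hb := hK_big m0 ha'.
have d0 := den_pos (x := a) m0 (proj2 (andP ha)).
set d := 1 - a + m%:R^-1 in hb d0.
set H := hK m a in h2 hb.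
set y := Num.sqrt (p%:R * m%:R).
have pm0 : (0 : R) <= p%:R * m%:R by rewrite mulr_ge0 ?ler0n.
have y2 : y ^+ 2 = p%:R * m%:R by rewrite sqr_sqrtr.
have y0 : 0 <= y by apply: sqrtr_ge0.
have y4 : 4 <= y by nra.
have mpos : (0 : R) < m%:R by rewrite ltr0n.
set u := m%:R * d.
have u0 : 0 < u by rewrite mulr_gt0.
have uE : m%:R * (1 - a) = u - 1.
  by rewrite /u /d; field; rewrite gt_eqF.
have p0 : (0 : R) <= p%:R by rewrite ler0n.
have k1 : (H / 2) * (p%:R / 4) <= (H - 1) * (A - 1).
  apply: ler_pM; lra.
have k2 : (4 / d / 2) * (p%:R / 4) <= (H / 2) * (p%:R / 4).
  apply: ler_wpM2r; lra.
have k3 : (4 / d / 2) * (p%:R / 4) = y ^+ 2 / (2 * u).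
  rewrite y2 /u; field; rewrite ?gt_eqF //.
have E : hterm m a A = 11 * a + (H - 1) * (A - 1) + m%:R * (1 - a).
  rewrite /hterm /gK ifF; last by apply/negbTE; rewrite -ltNge.
  rewrite -/H; ring.
have := amgm u0 y4.
rewrite E uE; move: ha => /andP[a0 a1]; lra.
Qed.

Lemma sumc_ord (R : realType) n (c : R) : \sum_(i < n) c = n%:R * c.
Proof. by rewrite sumr_const card_ord mulr_natl. Qed.

Lemma hubs_sum (R : realType) m p (a : 'I_p -> R) : (0 < m)%N -> (2 <= p)%N ->
  4 * p%:R <= m%:R :> R -> 16 <= p%:R * m%:R :> R ->
  (forall i, 0 <= a i <= 1) ->
  Num.min (p%:R * m%:R / 8) (p%:R * Num.sqrt (p%:R * m%:R)) <=
    \sum_i hterm m (a i) (\sum_j a j).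
Proof.
move=> m0 p2 pm pm16 ha.
set A := \sum_j a j.
have Ap : A <= p%:R.
  rewrite -[p%:R]mulr1 -sumc_ord; apply: ler_sum => i _; by case/andP: (ha i).
have aA : forall i, a i <= A.
  move=> i; rewrite /A (bigD1 i) //= lerDl; apply: sumr_ge0 => j _; by case/andP: (ha j).
have p2' : (2 : R) <= p%:R by rewrite (ler_nat R 2 p).
case: (lerP A (3 * p%:R / 4)) => HA.
  rewrite ge_min; apply/orP; left.
  apply: (@le_trans _ _ (\sum_i m%:R * (1 - a i) / 2)); last first.
    by apply: ler_sum => i _; exact: hub_half m0 (ha i) (aA i) Ap pm.
  rewrite -mulr_suml -mulr_sumr sumrB sumc_ord mulr1 -/A.
  have : (0 : R) <= m%:R by rewrite ler0n.
  nra.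
have pA : p%:R / 4 <= A - 1 by lra.
apply: (@le_trans _ _ (\sum_(i < p) Num.min (m%:R / 4) (Num.sqrt (p%:R * m%:R)))); last first.
  by apply: ler_sum => i _; exact: hub_big m0 (ha i) (aA i) Ap pm pA pm16.
rewrite sumc_ord.
have p0 : (0 : R) <= p%:R by rewrite ler0n.
case: (leP (m%:R / 4) (Num.sqrt (p%:R * m%:R))) => Hm.
  rewrite ge_min; apply/orP; left.
  have : (0 : R) <= m%:R by rewrite ler0n.
  nra.
by rewrite ge_min lexx orbT.
Qed.


Lemma collapse (R : realType) (r : seq R) (y : R) (F : R -> R) :
  uniq r -> y \in r -> \sum_(th <- r) (if y == th then F th else 0) = F y.
Proof.
move=> ur yr; rewrite (big_rem y) //= eqxx big_seq big1 ?addr0 //.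
move=> th; rewrite mem_rem_uniq // inE => /andP[ne _].
by rewrite eq_sym (negbTE ne).
Qed.


Definition Sx (R : realType) N (e : rel 'I_N) m (sig : 'I_m -> R) (s : {ffun 'I_N -> 'I_m}) (v : 'I_N) : R :=
  \sum_(v' < N | v' != v) Wmat R e v v' * sig (s v').

Lemma jprob_ge0 (R : realType) N m (sig : 'I_m -> R) phi t s :
  valid_scheme sig phi -> 0 <= @jprob R N m phi t s.
Proof.
case=> _ h _; rewrite /jprob mulr_ge0 // invr_ge0 ler0n //.
Qed.

Lemma pool_ineq (R : realType) N (e : rel 'I_N) m (sig : 'I_m -> R) phi (g : R -> R) i th :
  valid_scheme sig phi -> persuasive e sig phi -> 0 <= g 0 ->
  0 <= g th * \sum_(t : {perm 'I_N}) \sum_(s : {ffun 'I_N -> 'I_m}) (if sig (s (t i)) == th then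
           jprob phi t s * (th + Sx e sig s (t i) - 1) else 0).
Proof.
move=> vs pe g0.
set Pr := prsig sig phi i th.
set Nm0 := \sum_(t : {perm 'I_N}) \sum_(s : {ffun 'I_N -> 'I_m}) (if sig (s (t i)) == th then jprob phi t s * Sx e sig s (t i) else 0).
have NmE : forall x, \sum_(t : {perm 'I_N}) \sum_(s : {ffun 'I_N -> 'I_m}) (if sig (s (t i)) == th then
           jprob phi t s * (x + Sx e sig s (t i)) else 0) = x * Pr + Nm0.
  move=> x; rewrite /Pr /prsig /Nm0 mulr_sumr -big_split; apply: eq_bigr => t _.
  rewrite mulr_sumr -big_split; apply: eq_bigr => s _.
  case: ifP => _ /=; last by rewrite mulr0 addr0.
  by rewrite mulrDr mulrC.
have ExE : \sum_(t : {perm 'I_N}) \sum_(s : {ffun 'I_N -> 'I_m}) (if sig (s (t i)) == th then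
           jprob phi t s * (th + Sx e sig s (t i) - 1) else 0) = th * Pr + Nm0 - Pr.
  rewrite -NmE /Pr /prsig -!sumrB; apply: eq_bigr => t _; rewrite -sumrB; apply: eq_bigr => s _.
  by case: ifP; rewrite ?subr0 // mulrBr mulr1.
have Pr0 : 0 <= Pr.
  by apply: sumr_ge0 => t _; apply: sumr_ge0 => s _; case: ifP => _; [exact: jprob_ge0 vs | exact: lexx].
rewrite ExE.
case: (eqVneq Pr 0) => [P0|Pn0].
  have inner0 : forall (t : {perm 'I_N}) (s : {ffun 'I_N -> 'I_m}), (if sig (s (t i)) == th then jprob phi t s else 0) = 0.
    move=> t s.
    have h1 : forall t' : {perm 'I_N}, 0 <= \sum_(s : {ffun 'I_N -> 'I_m}) (if sig (s (t' i)) == th then jprob phi t' s else 0).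
      by move=> t'; apply: sumr_ge0 => s' _; case: ifP => _; [exact: jprob_ge0 vs | exact: lexx].
    have h2 : forall s' : {ffun 'I_N -> 'I_m}, true -> 0 <= (if sig (s' (t i)) == th then jprob phi t s' else 0).
      by move=> s' _; case: ifP => _; [exact: jprob_ge0 vs | exact: lexx].
    move: P0; rewrite /Pr /prsig => P0.
    have H2 : \sum_(s' : {ffun 'I_N -> 'I_m}) (if sig (s' (t i)) == th then jprob phi t s' else 0) = 0.
      by apply: (psumr_eq0P (fun t' _ => h1 t') P0).
    by apply: (psumr_eq0P h2 H2).
  have -> : Nm0 = 0.
    rewrite /Nm0 big1 // => t _; rewrite big1 // => s _.
    by have := inner0 t s; case: ifP => _ // ->; rewrite mul0r.
  by rewrite P0 !mulr0 subr0 addr0 mulr0.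
have Ppos : 0 < Pr by rewrite lt_def Pn0 Pr0.
have QE : forall x, Qcond e sig phi i x th = x + Nm0 / Pr.
  move=> x; rewrite /Qcond; move: (NmE x); rewrite /Sx => ->.
  by rewrite -/Pr mulrDl mulfK.
have [th0 Q1 Qmin] := pe i th Ppos.
rewrite QE in Q1.
have EE : th * Pr + Nm0 - Pr = Pr * (th + Nm0 / Pr - 1).
  by rewrite mulrBr mulr1 mulrDr [Pr * th]mulrC [Pr * (Nm0 / Pr)]mulrC mulfVK.
rewrite EE.
case: (eqVneq th 0) => [Eth|thn0].
  rewrite Eth in Q1 *.
  apply: mulr_ge0 => //; apply: mulr_ge0; [exact: ltW | by rewrite subr_ge0].
have thpos : 0 < th by rewrite lt_def thn0 th0.
have -> : th + Nm0 / Pr = 1.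
  apply: le_anti; rewrite Q1 andbT.
  case: (lerP 0 (1 - Nm0 / Pr)) => H.
    have := Qmin _ H; rewrite QE subrK lexx => /(_ isT).
    by rewrite lerBrDr.
  have := Qmin _ (lexx 0); rewrite QE add0r.
  have -> : 1 <= Nm0 / Pr by rewrite subr_lt0 in H; apply: ltW.
  by move=> /(_ isT) h; rewrite ltNge h in thpos.
by rewrite subrr !mulr0.
Qed.


Lemma agg (R : realType) N (e : rel 'I_N) m (sig : 'I_m -> R) phi (g : R -> R) :
  valid_scheme sig phi -> persuasive e sig phi -> 0 <= g 0 ->
  0 <= \sum_(t : {perm 'I_N}) \sum_(s : {ffun 'I_N -> 'I_m}) jprob phi t s *
        \sum_v g (sig (s v)) * (\sum_u Wmat R e v u * sig (s u) - 1).
Proof.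
move=> vs pe g0.
pose vals := undup [seq sig j | j <- enum 'I_m].
have H : 0 <= \sum_(i < N) \sum_(th <- vals) g th * \sum_(t : {perm 'I_N}) \sum_(s : {ffun 'I_N -> 'I_m})
     (if sig (s (t i)) == th then jprob phi t s * (th + Sx e sig s (t i) - 1) else 0).
  by apply: sumr_ge0 => i _; rewrite big_seq; apply: sumr_ge0 => th _; apply: pool_ineq.
apply: (le_trans H) => {H}; rewrite le_eqVlt; apply/orP; left; apply/eqP.
have step : forall i, \sum_(th <- vals) g th * \sum_(t : {perm 'I_N}) \sum_(s : {ffun 'I_N -> 'I_m})
     (if sig (s (t i)) == th then jprob phi t s * (th + Sx e sig s (t i) - 1) else 0) =
   \sum_(t : {perm 'I_N}) \sum_(s : {ffun 'I_N -> 'I_m}) jprob phi t s *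
     (g (sig (s (t i))) * (sig (s (t i)) + Sx e sig s (t i) - 1)).
  move=> i.
  under eq_bigr do rewrite mulr_sumr.
  rewrite exchange_big /=; apply: eq_bigr => t _.
  under eq_bigr do rewrite mulr_sumr.
  rewrite exchange_big /=; apply: eq_bigr => s _.
  rewrite (eq_bigr (fun th => if sig (s (t i)) == th then
       g th * (jprob phi t s * (th + Sx e sig s (t i) - 1)) else 0)); last first.
    by move=> th _; case: ifP => _; rewrite ?mulr0.
  rewrite collapse ?undup_uniq //; last first.
    by rewrite mem_undup; apply: map_f; rewrite mem_enum.
  by rewrite mulrCA.
under eq_bigr do rewrite step.
rewrite exchange_big /=; apply: eq_bigr => t _.
rewrite exchange_big /=; apply: eq_bigr => s _.
rewrite -mulr_sumr; congr (_ * _).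
rewrite [RHS](reindex_inj (@perm_inj _ t)) /=.
apply: eq_bigr => v _.
by rewrite rowsplit.
Qed.

Lemma sum_jprob (R : realType) N m (sig : 'I_m -> R) phi :
  valid_scheme sig phi ->
  \sum_(t : {perm 'I_N}) \sum_(s : {ffun 'I_N -> 'I_m}) jprob phi t s = 1.
Proof.
case=> _ _ h1.
transitivity (\sum_(t : {perm 'I_N}) (#|{perm 'I_N}|%:R : R)^-1).
  by apply: eq_bigr => t _; rewrite /jprob -mulr_sumr h1 mulr1.
rewrite sumr_const.
rewrite -[X in _ *+ X]/#|{perm 'I_N}|.
rewrite -[(_^-1) *+ _]mulr_natr mulVf // pnatr_eq0 -lt0n.
by apply/card_gt0P; exists 1%g.
Qed.

Lemma cost_lb (R : realType) N (e : rel 'I_N) m (sig : 'I_m -> R) phi (g : R -> R) (C Tb : R) :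
  valid_scheme sig phi -> persuasive e sig phi -> 0 <= g 0 ->
  (forall sg : 'I_N -> R, (forall v, 0 <= sg v <= 1) ->
     \sum_v g (sg v) * (\sum_u Wmat R e v u * sg u - 1) <= C * \sum_v sg v - Tb) ->
  Tb <= C * cost sig phi.
Proof.
move=> vs pe g0 Hb.
have A := agg vs pe g0.
have B : \sum_(t : {perm 'I_N}) \sum_(s : {ffun 'I_N -> 'I_m}) jprob phi t s *
        \sum_v g (sig (s v)) * (\sum_u Wmat R e v u * sig (s u) - 1)
   <= \sum_(t : {perm 'I_N}) \sum_(s : {ffun 'I_N -> 'I_m}) jprob phi t s *
        (C * \sum_v sig (s v) - Tb).
  apply: ler_sum => t _; apply: ler_sum => s _; apply: ler_wpM2l; first exact: jprob_ge0 vs.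
  apply: Hb => v; case: vs => h _ _; exact: h.
have CE : \sum_(t : {perm 'I_N}) \sum_(s : {ffun 'I_N -> 'I_m}) jprob phi t s *
        (C * \sum_v sig (s v) - Tb) = C * cost sig phi - Tb.
  rewrite /cost -[Tb in RHS]mulr1 -(sum_jprob vs) mulr_sumr mulr_sumr -sumrB; apply: eq_bigr => t _.
  rewrite mulr_sumr mulr_sumr -sumrB; apply: eq_bigr => s _.
  by rewrite mulrBr mulrCA [Tb * _]mulrC.
rewrite -subr_ge0 -CE; exact: le_trans A B.
Qed.


Lemma psiT (R : realType) p m q (B : R) (f : VT p m q -> R) : (0 < m)%N ->
  (forall a : 'I_p -> R, (forall i, 0 <= a i <= 1) -> B <= \sum_i hterm m (a i) (\sum_j a j)) ->
  (forall x, 0 <= f x <= 1) ->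
  q%:R + B <= \sum_x (11 * f x - gK m (f x) * (rs f x - 1)).
Proof.
move=> m0 HB hf.
rewrite sumT addrC lerD //; last first.
  rewrite -(sum1_ord R q); apply: ler_sum => z _; rewrite rs_iso; exact: iso_ineq.
apply: (le_trans (HB (fun i => f (inl (inl i))) (fun i => hf _))).
rewrite -big_split /=; apply: ler_sum => i _.
rewrite rs_hub.
set a := f (inl (inl i)); set A := \sum_j f (inl (inl j)).
set X := \sum_l f (inl (inr (i, l))).
have E : 11 * a - gK m a * (A + X - 1) = 11 * a - gK m a * (A - 1) - \sum_l gK m a * f (inl (inr (i, l))).
  by rewrite -mulr_sumr -/X; ring.
have key : \sum_(l < m) (1 - a) <= \sum_l (11 * f (inl (inr (i, l))) -
      gK m (f (inl (inr (i, l)))) * (rs f (inl (inr (i, l))) - 1) - gK m a * f (inl (inr (i, l)))).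
  apply: ler_sum => l _; rewrite rs_leaf; exact: leaf_ineq m0 (hf _) (hf _).
rewrite sumc_ord [X in _ <= X]sumrB in key.
rewrite E /hterm; lra.
Qed.

Lemma pers_lb (R : realType) p m q (B : R) : (0 < m)%N ->
  (forall a : 'I_p -> R, (forall i, 0 <= a i <= 1) -> B <= \sum_i hterm m (a i) (\sum_j a j)) ->
  forall M (sig : 'I_M -> R) phi, valid_scheme sig phi -> persuasive (@Ev p m q) sig phi ->
  q%:R + B <= 11 * cost sig phi.
Proof.
move=> m0 HB M sig phi vs pe.
apply: (cost_lb (g := gK m) vs pe); first by rewrite gK0.
move=> sg hsg.
have := psiT (f := fun x => sg (enum_rank x)) m0 HB (fun x => hsg _).
rewrite sumrB -mulr_sumr.
have E : \sum_v gK m (sg v) * (\sum_u Wmat R (@Ev p m q) v u * sg u - 1) =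
    \sum_x gK m (sg (enum_rank x)) * (rs (fun y => sg (enum_rank y)) x - 1).
  by rewrite sumN; apply: eq_bigr => x _; rewrite rowN enum_rankK.
have E2 : \sum_v sg v = \sum_x sg (enum_rank x) by rewrite sumN.
rewrite E E2.
lra.
Qed.


Lemma sqrt_ex n : exists P, (P * P <= n < P.+1 * P.+1)%N.
Proof.
elim: n => [|n [P /andP[h1 h2]]]; first by exists 0%N.
case: (ltnP n.+1 (P.+1 * P.+1)) => h.
  by exists P; rewrite h andbT; lia.
by exists P.+1; apply/andP; split; lia.
Qed.

Lemma nat_facts n k : (256 <= n)%N -> (2 <= k)%N -> (2 * k <= n)%N ->
  exists P p m, [/\ (2 <= p)%N, (p = k \/ (p = P /\ n < 256 * P * P)%N),
     (4 * p <= m)%N, (p + p * m + (k - p) <= n)%N & [/\ (n <= 4 * (p * m))%N, (64 * p * p <= n)%N & (p <= k)%N]].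
Proof.
move=> n256 k2 kn.
have [P /andP[HP1 HP2]] := sqrt_ex (n %/ 64).
have F3 : (64 * (P * P) <= n)%N.
  by rewrite mulnC -leq_divRL.
have F4 : (n < 64 * (P.+1 * P.+1))%N.
  by rewrite mulnC -ltn_divLR.
have P2 : (2 <= P)%N by nia.
pose p := minn k P.
have pk : (p <= k)%N by rewrite geq_minl.
have pP : (p <= P)%N by rewrite geq_minr.
have p2 : (2 <= p)%N by rewrite leq_min k2 P2.
have pcase : p = k \/ (p = P /\ n < 256 * P * P)%N.
  rewrite /p; case: (leqP k P) => h; [left | right]; split => //; nia.
pose D := (n %/ (2 * p))%N.
have F1 : (D * (2 * p) <= n)%N by apply: leq_trunc_div.
have F2 : (n < D.+1 * (2 * p))%N by apply: ltn_ceil; lia.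
have D32 : (32 * p <= D)%N by rewrite leq_divRL; nia.
exists P, p, D.-1; split => //; try nia.
split => //; nia.
Qed.

Theorem theorem6p2 (R : realType) :
  exists c1 c2 c3 c4 : R,
    [/\ 0 < c1, 0 < c2, 0 < c3 & 0 < c4] /\
    exists n0 : nat, forall n k : nat,
      (n0 <= n)%N -> (2 <= k)%N -> (k <= n)%N ->
      exists (N : nat) (e : rel 'I_N),
        (N <= n)%N /\ simple_graph e /\
        [/\
            (forall th : 'I_N -> R, feasible e th -> c1 * k%:R <= l1norm th),
            (exists th : 'I_N -> R, feasible e th /\ l1norm th <= c2 * k%:R),
            (forall th : 'I_N -> R, stable e th -> c3 * n%:R <= l1norm th) &
            (forall (m : nat) (sig : 'I_m -> R)
                    (phi : {perm 'I_N} -> {ffun 'I_N -> 'I_m} -> R),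
                valid_scheme sig phi -> persuasive e sig phi ->
                c4 * Num.min (k%:R * Num.sqrt (n%:R)) n%:R <= cost sig phi)].
Proof.
exists 1, 1, 8^-1, 352^-1; split.
  by split; rewrite ?ltr01 // invr_gt0 ltr0n.
exists 256%N => n k n0 k2 kn.
have Rn0 : (256 : R) <= n%:R by rewrite (ler_nat R 256 n).
have Rk2 : (2 : R) <= k%:R by rewrite (ler_nat R 2 k).
have Rkn : (k%:R : R) <= n%:R by rewrite ler_nat.
set s := Num.sqrt (n%:R : R).
have s0 : 0 <= s by apply: sqrtr_ge0.
have s2 : s ^+ 2 = n%:R by rewrite sqr_sqrtr // ler0n.
have minn1 : Num.min (k%:R * s) n%:R <= n%:R by rewrite ge_min lexx orbT.
have minn2 : Num.min (k%:R * s) n%:R <= k%:R * s by rewrite ge_min lexx.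
have min0 : 0 <= Num.min (k%:R * s) n%:R by rewrite le_min mulr_ge0 ?ler0n.
case: (leqP (2 * k) n) => hk.
- have [P [p [m [p2 pcase pm NN [n4pm n64 pk]]]]] := nat_facts n0 k2 hk.
  have m0 : (0 < m)%N by lia.
  exists (Nv p m (k - p)), (@Ev p m (k - p)); split; first by rewrite NvE.
  split; first exact: Ev_simple.
  have kE : (p + (k - p))%N = k by lia.
  have Rp2 : (2 : R) <= p%:R by rewrite (ler_nat R 2 p).
  have Rpm : (n%:R : R) <= 4 * (p%:R * m%:R).
    by rewrite -natrM -(natrM R 4) ler_nat.
  have Rpm4 : (4 * p%:R : R) <= m%:R by rewrite -(natrM R 4) ler_nat.
  have Rkp : (0 : R) <= (k - p)%:R by rewrite ler0n.
  have Rm0 : (0 : R) <= m%:R by rewrite ler0n.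
  split.
  + move=> th fe; have := opt_lb m0 fe; by rewrite kE mul1r.
  + have [th [fe l1]] := opt_ub R p m (k - p); exists th; split => //; move: l1; by rewrite kE mul1r.
  + move=> th st; apply: le_trans (stable_lb st).
    have : m%:R * (p%:R - 1) >= m%:R * p%:R / 2 :> R.
      rewrite mulrBr mulr1; nra.
    lra.
  + move=> M sig phi vs pe.
    set t := Num.sqrt (p%:R * m%:R : R).
    have pm0 : (0 : R) <= p%:R * m%:R by rewrite mulr_ge0 ?ler0n.
    have t2 : t ^+ 2 = p%:R * m%:R by rewrite sqr_sqrtr.
    have t0 : 0 <= t by apply: sqrtr_ge0.
    have ts : s / 2 <= t by nra.
    set B := Num.min (p%:R * m%:R / 8) (p%:R * t).
    have HB : forall a : 'I_p -> R, (forall i, 0 <= a i <= 1) ->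
        B <= \sum_i hterm m (a i) (\sum_j a j).
      move=> a ha; apply: hubs_sum => //; nra.
    have := pers_lb m0 HB vs pe.
    have KB : Num.min (k%:R * s) n%:R / 32 <= B.
      rewrite le_min; apply/andP; split; first lra.
      case: pcase => [pk'|[pP nP]].
        rewrite pk'.
        have : k%:R * (s / 2) <= k%:R * t :> R by rewrite ler_wpM2l ?ler0n.
        nra.
      have nP' : (n%:R : R) <= 256 * p%:R * p%:R.
        by rewrite pP -!natrM ler_nat ltnW.
      have : p%:R * (s / 2) <= p%:R * t :> R by rewrite ler_wpM2l ?ler0n.
      have p0 : (0 : R) <= p%:R by rewrite ler0n.
      have : s <= 16 * p%:R by nra.
      nra.
    lra.
- exists (Nv 0 1 k), (@Ev 0 1 k); split; first by rewrite NvE.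
  split; first exact: Ev_simple.
  have Rhk : (n%:R : R) < 2 * k%:R by rewrite -(natrM R 2) ltr_nat.
  split.
  + move=> th fe; have := opt_lb (isT : (0 < 1)%N) fe; by rewrite add0n mul1r.
  + have [th [fe l1]] := opt_ub R 0 1 k; exists th; split => //; move: l1; by rewrite add0n mul1r.
  + move=> th st; apply: le_trans (stable_lb st); rewrite mul1r; lra.
  + move=> M sig phi vs pe.
    have HB : forall a : 'I_0 -> R, (forall i, 0 <= a i <= 1) ->
        0 <= \sum_i hterm 1 (a i) (\sum_j a j).
      by move=> a _; rewrite big_ord0.
    have := pers_lb (isT : (0 < 1)%N) HB vs pe.
    lra.
Qed.
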